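(* Let $G_1,G_2$ be finite connected bipartite $\mathcal{C}$-$\mathrm{HH}$ graphs which both satisfy property (B2). Then: (i) if $\Delta(G_1)\le\Delta(G_2)$, then $G_1$ is $\mathcal{C}$-$\mathrm{HH}$-morphic to $G_2$; (ii) if $\Delta(G_1)=\Delta(G_2)$, then $G_1,G_2$ are $\mathcal{C}$-$\mathrm{HH}$-symmetric; (iii) if $\Delta(G_1)>\Delta(G_2)$ and $G_2$ satisfies property (B2* ), then $G_1,G_2$ are $\mathcal{C}$-$\mathrm{HH}$-symmetric.
   Context: $\Delta(G)$ is the maximum degree. For a connected bipartite graph $G$ with bipartition $(X,Y)$: property (B2) means that for each $k\le\Delta(G)$ every $k$-element subset of $X$ and every $k$-element subset of $Y$ has a common neighbour (a vertex adjacent to all its elements); property (B2* ) means that some vertex is adjacent to all of $X$ and some vertex is adjacent to all of $Y$. Subgraphs are induced; a homomorphism maps edges to edges. A graph $G$ is $\mathcal{C}$-$\mathrm{HH}$ if every homomorphism from a finite connected induced subgraph of $G$ into $G$ extends to a homomorphism $G\to G$. $G_1$ is $\mathcal{C}$-$\mathrm{HH}$-morphic to $G_2$ if every homomorphism from a finite connected induced subgraph $A$ of $G_1$ onto an induced subgraph $B$ of $G_2$ extends to a homomorphism $G_1\to G_2$; $G_1,G_2$ are $\mathcal{C}$-$\mathrm{HH}$-symmetric if each is $\mathcal{C}$-$\mathrm{HH}$-morphic to the other. *)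

(* Defs.v *)
From mathcomp Require Import all_boot.
Set Implicit Arguments. Unset Strict Implicit. Unset Printing Implicit Defensive.

Definition simple_graph (V : finType) (e : rel V) : Prop :=
  symmetric e /\ irreflexive e.

Definition connected_on (V : finType) (e : rel V) (A : {set V}) : Prop :=
  A != set0 /\
  forall x y, x \in A -> y \in A ->
    connect [rel u v | [&& u \in A, v \in A & e u v]] x y.

Definition connected_graph (V : finType) (e : rel V) : Prop :=
  connected_on e [set: V].

Definition bipartition (V : finType) (e : rel V) (X Y : {set V}) : Prop :=
  X :&: Y = set0 /\ X :|: Y = [set: V] /\
  forall u v, e u v -> (u \in X) && (v \in Y) || (u \in Y) && (v \in X).

Definition nbhd (V : finType) (e : rel V) (v : V) : {set V} := [set w | e v w].

Definition max_deg (V : finType) (e : rel V) : nat := \max_(v : V) #|nbhd e v|.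

Definition common_nbr (V : finType) (e : rel V) (S : {set V}) (z : V) : bool :=
  [forall s in S, e s z].

Definition B2 (V : finType) (e : rel V) (X Y : {set V}) : Prop :=
  forall k, k <= max_deg e ->
    (forall S : {set V}, S \subset X -> #|S| = k -> exists z, common_nbr e S z) /\
    (forall S : {set V}, S \subset Y -> #|S| = k -> exists z, common_nbr e S z).

Definition B2star (V : finType) (e : rel V) (X Y : {set V}) : Prop :=
  (exists z, common_nbr e X z) /\ (exists z, common_nbr e Y z).

Definition hom_on (V1 V2 : finType) (e1 : rel V1) (e2 : rel V2)
  (A : {set V1}) (f : V1 -> V2) : Prop :=
  forall x y, x \in A -> y \in A -> e1 x y -> e2 (f x) (f y).

Definition hom (V1 V2 : finType) (e1 : rel V1) (e2 : rel V2) (f : V1 -> V2) : Prop :=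
  forall x y, e1 x y -> e2 (f x) (f y).

(* G1 is C-HH-morphic to G2: every homomorphism from a finite connected induced
   subgraph A of G1 onto an induced subgraph B of G2 (B is the induced subgraph
   on the image f @: A) extends to a homomorphism G1 -> G2. *)
Definition CHH_morphic (V1 V2 : finType) (e1 : rel V1) (e2 : rel V2) : Prop :=
  forall (A : {set V1}) (B : {set V2}) (f : V1 -> V2),
    connected_on e1 A -> hom_on e1 e2 A f -> f @: A = B ->
    exists g : V1 -> V2, hom e1 e2 g /\ {in A, forall x, g x = f x}.

Definition CHH (V : finType) (e : rel V) : Prop := CHH_morphic e e.

Definition CHH_symmetric (V1 V2 : finType) (e1 : rel V1) (e2 : rel V2) : Prop :=
  CHH_morphic e1 e2 /\ CHH_morphic e2 e1.

(* Main.v *)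
Require Import Defs.
From mathcomp Require Import all_boot.
Set Implicit Arguments. Unset Strict Implicit. Unset Printing Implicit Defensive.

Lemma bipE (V : finType) (e : rel V) X Y :
  bipartition e X Y -> forall y, (y \in Y) = (y \notin X).
Proof.
move=> [HI [HU _]] y.
have: y \in X :|: Y by rewrite HU inE.
have: y \notin X :&: Y by rewrite HI inE.
rewrite !inE; by case: (y \in X); case: (y \in Y).
Qed.

Lemma bip_edge (V : finType) (e : rel V) X Y u v :
  bipartition e X Y -> e u v -> (u \in X) = (v \notin X).
Proof.
move=> B euv; have [_ [_ H]] := B; move: (H _ _ euv); rewrite !(bipE B).
by case: (u \in X); case: (v \in X).
Qed.

Lemma morphic_gen (V1 V2 : finType) (e1 : rel V1) (e2 : rel V2)
  (X1 Y1 : {set V1}) (X2 Y2 : {set V2}) :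
  symmetric e1 -> irreflexive e1 -> symmetric e2 ->
  bipartition e1 X1 Y1 -> bipartition e2 X2 Y2 ->
  (exists u w, e2 u w) ->
  (forall S : {set V2}, S \subset X2 \/ S \subset Y2 -> #|S| <= max_deg e1 ->
     exists z, common_nbr e2 S z) ->
  CHH_morphic e1 e2.
Proof.
move=> sym1 irr1 sym2 B1 B2' [u0 [w0 e0]] HS A B f [An0 Acon] fhom _.
have [a aA] : exists a, a \in A by apply/set0Pn.
have X1edge : forall p q, e1 p q -> (p \in X1) = (q \notin X1).
  by move=> p q epq; exact: (bip_edge B1 epq).
have [P [PX [Pedge par]]] : exists P, (P = X2 \/ P = Y2) /\
   (forall p q, e2 p q -> (p \in P) = (q \notin P)) /\
   (forall x, x \in A -> (f x \in P) = (x \in X1)).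
  have PE : forall P, (P = X2 \/ P = Y2) ->
     (forall p q, e2 p q -> (p \in P) = (q \notin P)).
    move=> P [->|->] p q epq; rewrite ?(bipE B2') (bip_edge B2' epq) //.
  have PA : forall P, (P = X2 \/ P = Y2) -> (f a \in P) = (a \in X1) ->
     (forall x, x \in A -> (f x \in P) = (x \in X1)).
    move=> P HP Ha x xA.
    have cl : closed [rel u v | [&& u \in A, v \in A & e1 u v]]
                [pred y | (f y \in P) == (y \in X1)].
      move=> u v /= /and3P[uA vA euv]; rewrite !inE.
      rewrite (PE P HP _ _ (fhom _ _ uA vA euv)) (X1edge _ _ euv).
      by case: (f v \in P); case: (v \in X1).
    have := closed_connect cl (Acon a x aA xA).
    by rewrite !inE Ha eqxx => /esym/eqP.
  case Hc: ((f a \in X2) == (a \in X1)).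
    exists X2; have HP : X2 = X2 \/ X2 = Y2 by left.
    by split => //; split; [exact: PE | apply: PA => //; apply/eqP].
  exists Y2; have HP : Y2 = X2 \/ Y2 = Y2 by right.
  split => //; split; [exact: PE | apply: PA => //].
  rewrite (bipE B2'); move: Hc; by case: (f a \in X2); case: (a \in X1).
have main : forall n (D : {set V1}), A \subset D -> #|D :\: A| = n ->
  exists g, hom_on e1 e2 D g /\ {in A, forall x, g x = f x} /\
     {in D, forall x, (g x \in P) = (x \in X1)}.
  elim=> [|n IH] D AD.
    move/eqP; rewrite cards_eq0 setD_eq0 => DA.
    exists f; split; last split => //.
      by move=> x y xD yD; apply: fhom; apply: (subsetP DA).
    by move=> x xD; apply: par; apply: (subsetP DA).
  move=> Hc.
  have [v vDA] : exists v, v \in D :\: A by apply/set0Pn; rewrite -card_gt0 Hc.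
  move: vDA; rewrite inE => /andP[vA vD].
  have AD' : A \subset D :\ v.
    apply/subsetP => x xA; rewrite !inE (subsetP AD) // andbT.
    by apply/eqP => xv; rewrite -xv xA in vA.
  have card' : #|(D :\ v) :\: A| = n.
    have E : (D :\ v) :\: A = (D :\: A) :\ v.
      by apply/setP => x; rewrite !inE; case: (x \in A); case: (x == v).
    have := cardsD1 v (D :\: A); rewrite Hc inE vA vD /= E.
    by move=> [->].
  have [g' [hg' [ag' pg']]] := IH _ AD' card'.
  pose S := g' @: ((D :\ v) :&: nbhd e1 v).
  have Sside : forall s, s \in S -> (s \in P) = (v \notin X1).
    move=> s /imsetP[x]; rewrite !inE => /andP[/andP[xv xD] evx] ->.
    rewrite pg' ?inE ?xv ?xD // (X1edge x v) ?negbK //; by rewrite sym1.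
  have [z [zc zP]] : exists z, common_nbr e2 S z /\ (z \in P) = (v \in X1).
    case: (boolP (S == set0)) => [S0|Sn0].
      have cn : forall z, common_nbr e2 S z.
        by move=> z; apply/forall_inP => s; rewrite (eqP S0) inE.
      have := Pedge _ _ e0.
      case Hu: (u0 \in P) => Hw.
        case Hv: (v \in X1).
          by exists u0.
        by exists w0; split => //; move: Hw; case: (w0 \in P).
      case Hv: (v \in X1).
        by exists w0; split => //; move: Hw; case: (w0 \in P).
      by exists u0.
    have [s0 s0S] := set0Pn _ Sn0.
    have side : S \subset X2 \/ S \subset Y2.
      case: PX => PX; subst P; case Hv: (v \in X1); [right|left|left|right];
        apply/subsetP => s sS; have := Sside s sS; rewrite Hv /= ?(bipE B2');
        by case: (s \in X2).
    have cardS : #|S| <= max_deg e1.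
      apply: leq_trans (leq_imset_card _ _) _.
      apply: leq_trans (subset_leq_card (subsetIr _ _)) _.
      rewrite /max_deg; exact: leq_bigmax.
    have [z zc] := HS S side cardS.
    exists z; split => //.
    have e0z := (forall_inP zc) s0 s0S.
    have := Pedge _ _ e0z; rewrite (Sside s0 s0S).
    by case: (z \in P); case: (v \in X1).
  exists (fun x => if x == v then z else g' x); split; last split.
  - move=> x y xD yD exy.
    case: eqP => [xv|xv]; case: eqP => [yv|yv].
    + by rewrite xv yv irr1 in exy.
    + subst x; rewrite sym2; apply: (forall_inP zc); apply/imsetP; exists y => //.
      by rewrite !inE yD exy !andbT; apply/eqP.
    + apply: (forall_inP zc); apply/imsetP; exists x => //.
      by rewrite !inE xD -yv sym1 exy !andbT; apply/eqP; rewrite yv.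
    + apply: hg' => //; rewrite !inE ?xD ?yD andbT; apply/eqP => //.
  - move=> x xA; case: eqP => [xv|_]; last exact: ag'.
    by rewrite -xv xA in vA.
  - move=> x xD; case: eqP => [->|xv] //.
    by apply: pg'; rewrite !inE xD andbT; apply/eqP.
have [g [hg [ag _]]] := main _ setT (subsetT A) erefl.
by exists g; split => // x y exy; apply: hg; rewrite ?inE.
Qed.

Lemma morphic_triv (V1 V2 : finType) (e1 : rel V1) (e2 : rel V2) :
  (forall x y, ~~ e1 x y) -> CHH_morphic e1 e2.
Proof.
move=> H A B f _ _ _; exists f; split => // x y exy.
by have := H x y; rewrite exy.
Qed.

Lemma nonempty_side (V : finType) (e : rel V) X Y :
  connected_graph e -> bipartition e X Y -> exists v, v \in X \/ v \in Y.
Proof.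
move=> [Hn _] [_ [HU _]]; have [v _] := set0Pn _ Hn.
have : v \in X :|: Y by rewrite HU inE.
by rewrite inE => /orP[h|h]; exists v; [left|right].
Qed.

Lemma part_i (V1 V2 : finType) (e1 : rel V1) (e2 : rel V2)
  (X1 Y1 : {set V1}) (X2 Y2 : {set V2}) :
  simple_graph e1 -> simple_graph e2 -> connected_graph e2 ->
  bipartition e1 X1 Y1 -> bipartition e2 X2 Y2 -> B2 e2 X2 Y2 ->
  max_deg e1 <= max_deg e2 -> CHH_morphic e1 e2.
Proof.
move=> [sym1 irr1] [sym2 irr2] con2 B1 B2' HB le12.
case: (pickP (fun p : V1 * V1 => e1 p.1 p.2)) => [[x y] /= exy | none]; last first.
  by apply: morphic_triv => x y; have := none (x, y); rewrite /= => ->.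
have d1 : 1 <= max_deg e1.
  apply: leq_trans (_ : #|nbhd e1 x| <= _); last by rewrite /max_deg; exact: leq_bigmax.
  by rewrite card_gt0; apply/set0Pn; exists y; rewrite inE.
apply: (morphic_gen sym1 irr1 sym2 B1 B2').
  have [v0 hv0] := nonempty_side con2 B2'.
  have [HX HY] := HB 1 (leq_trans d1 le12).
  have [z hz] : exists z, common_nbr e2 [set v0] z.
    case: hv0 => hv0; [apply: HX | apply: HY]; rewrite ?cards1 ?sub1set //.
  exists v0, z; exact: ((forall_inP hz) v0 (set11 v0)).
move=> S side cS; have [HX HY] := HB #|S| (leq_trans cS le12).
by case: side => h; [apply: HX | apply: HY].
Qed.

Lemma part_iii (V1 V2 : finType) (e1 : rel V1) (e2 : rel V2)
  (X1 Y1 : {set V1}) (X2 Y2 : {set V2}) :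
  simple_graph e1 -> simple_graph e2 -> connected_graph e2 ->
  bipartition e1 X1 Y1 -> bipartition e2 X2 Y2 -> B2star e2 X2 Y2 ->
  CHH_morphic e1 e2.
Proof.
move=> [sym1 irr1] [sym2 irr2] con2 B1 B2' [[zx hx] [zy hy]].
have sub : forall (T S : {set V2}) z, S \subset T -> common_nbr e2 T z -> common_nbr e2 S z.
  by move=> T S z /subsetP ST /forall_inP h; apply/forall_inP => s sS; apply: h; apply: ST.
apply: (morphic_gen sym1 irr1 sym2 B1 B2').
  have [v0 [hv0|hv0]] := nonempty_side con2 B2'.
    by exists v0, zx; exact: ((forall_inP hx) v0 hv0).
  by exists v0, zy; exact: ((forall_inP hy) v0 hv0).
move=> S [h|h] _; [exists zx | exists zy]; exact: sub h _.
Qed.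

Theorem lemma6p5 (V1 V2 : finType) (e1 : rel V1) (e2 : rel V2)
  (X1 Y1 : {set V1}) (X2 Y2 : {set V2}) :
  simple_graph e1 -> simple_graph e2 ->
  connected_graph e1 -> connected_graph e2 ->
  bipartition e1 X1 Y1 -> bipartition e2 X2 Y2 ->
  CHH e1 -> CHH e2 ->
  B2 e1 X1 Y1 -> B2 e2 X2 Y2 ->
  [/\ (max_deg e1 <= max_deg e2 -> CHH_morphic e1 e2),
      (max_deg e1 = max_deg e2 -> CHH_symmetric e1 e2) &
      (max_deg e2 < max_deg e1 -> B2star e2 X2 Y2 -> CHH_symmetric e1 e2)].
Proof.
move=> s1 s2 c1 c2 b1 b2 _ _ h1 h2; split.
- exact: (part_i s1 s2 c2 b1 b2 h2).
- move=> E; split.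
    by apply: (part_i s1 s2 c2 b1 b2 h2); rewrite E.
  by apply: (part_i s2 s1 c1 b2 b1 h1); rewrite E.
- move=> lt st; split.
    exact: (part_iii s1 s2 c2 b1 b2 st).
  by apply: (part_i s2 s1 c1 b2 b1 h1); apply: ltnW.
Qed.
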